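(* Let $A\in\mathbb C^{m\times n}$ with $m<n$ have full rank. For every $1\le q\le\infty$, $A^\dagger\in\mathrm{ginv}_{\mathrm{col}(2,q)}(A)$ and $A^\dagger\in\mathrm{pginv}_{\mathrm{col}(2,q)}(A)$. For $1\le q<\infty$ both sets equal $\{A^\dagger\}$. For $q=\infty$ they need not be singletons: there exist full-rank $A$ for which $\mathrm{ginv}_{\mathrm{col}(2,\infty)}(A)$ contains elements other than $A^\dagger$ (e.g. $A=\begin{bmatrix}\eta^{-1}&0&0\\0&1&0\end{bmatrix}$ with $0<\eta<1$), and full-rank $A$ for which $\mathrm{pginv}_{\mathrm{col}(2,\infty)}(A)$ contains elements other than $A^\dagger$.
   Context: For $M$ with columns $m_j$: $\|M\|_{\mathrm{col}(p,q)}=(\sum_j\|m_j\|_p^q)^{1/q}$ (maximum over $j$ for $q=\infty$). $\mathcal G(A)=\{X:AX=I_m\}$; $\mathrm{ginv}_\nu(A)=\arg\min_{X\in\mathcal G(A)}\|X\|_\nu$, $\mathrm{pginv}_\nu(A)=\arg\min_{X\in\mathcal G(A)}\|XA\|_\nu$ (sets). $A^\dagger=A^H(AA^H)^{-1}$. *)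

(* Defs.v *)
From Stdlib Require Import Reals Lra ClassicalEpsilon.
Open Scope R_scope.

Definition C := (R * R)%type.
Definition C0 : C := (0, 0).
Definition C1 : C := (1, 0).
Definition Cadd (z w : C) : C := (fst z + fst w, snd z + snd w).
Definition Cmul (z w : C) : C :=
  (fst z * fst w - snd z * snd w, fst z * snd w + snd z * fst w).
Definition Cconj (z : C) : C := (fst z, - snd z).
Definition Cmod2 (z : C) : R := fst z * fst z + snd z * snd z.

Fixpoint csum (n : nat) (f : nat -> C) : C :=
  match n with O => C0 | S k => Cadd (csum k f) (f k) end.
Fixpoint rsum (n : nat) (f : nat -> R) : R :=
  match n with O => 0 | S k => rsum k f + f k end.
Fixpoint rmax (n : nat) (f : nat -> R) : R :=
  match n with O => 0 | S k => Rmax (rmax k f) (f k) end.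

(* Matrices: entries indexed by nat; dimensions are carried separately and
   only entries with indices in range are ever relevant. *)
Definition mat := nat -> nat -> C.

Definition mmul (p : nat) (M N : mat) : mat :=
  fun i k => csum p (fun j => Cmul (M i j) (N j k)).
Definition conjtr (M : mat) : mat := fun i j => Cconj (M j i).
Definition idm : mat := fun i j => if Nat.eqb i j then C1 else C0.

Definition meq (r c : nat) (M N : mat) : Prop :=
  forall i j, (i < r)%nat -> (j < c)%nat -> M i j = N i j.

Definition is_inv (m : nat) (M B : mat) : Prop :=
  meq m m (mmul m M B) idm /\ meq m m (mmul m B M) idm.
(* the inverse of an m x m matrix (meaningful when it exists) *)
Definition minv (m : nat) (M : mat) : mat :=
  epsilon (inhabits (fun _ _ => C0)) (is_inv m M).

Definition pinv (m n : nat) (A : mat) : mat :=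
  mmul m (conjtr A) (minv m (mmul n A (conjtr A))).

(* full rank for m x n with m < n: the rows are linearly independent *)
Definition full_row_rank (m n : nat) (A : mat) : Prop :=
  forall c : nat -> C,
    (forall j, (j < n)%nat -> csum m (fun i => Cmul (c i) (A i j)) = C0) ->
    forall i, (i < m)%nat -> c i = C0.

Definition Gset (m n : nat) (A X : mat) : Prop := meq m m (mmul n A X) idm.

Inductive ext := Fin (q : R) | Inf.
Definition valid_exp (q : ext) : Prop :=
  match q with Fin q => 1 <= q | Inf => True end.

(* x^q for x >= 0, with 0^q = 0 *)
Definition rpow (x q : R) : R :=
  if Req_EM_T x 0 then 0 else Rpower x q.

Definition colnorm2 (r : nat) (M : mat) (j : nat) : R :=
  sqrt (rsum r (fun i => Cmod2 (M i j))).

Definition colnorm (r c : nat) (q : ext) (M : mat) : R :=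
  match q with
  | Fin q => rpow (rsum c (fun j => rpow (colnorm2 r M j) q)) (/ q)
  | Inf => rmax c (fun j => colnorm2 r M j)
  end.

Definition in_ginv (m n : nat) (q : ext) (A X : mat) : Prop :=
  Gset m n A X /\
  forall Y, Gset m n A Y -> colnorm n m q X <= colnorm n m q Y.

Definition in_pginv (m n : nat) (q : ext) (A X : mat) : Prop :=
  Gset m n A X /\
  forall Y, Gset m n A Y ->
    colnorm n n q (mmul m X A) <= colnorm n n q (mmul m Y A).

Definition Aeta (eta : R) : mat :=
  fun i j => match i, j with
             | O, O => (/ eta, 0)
             | 1%nat, 1%nat => C1
             | _, _ => C0
             end.

(* Main.v *)
Require Import Defs.
From Stdlib Require Import Reals.
Open Scope R_scope.
From Stdlib Require Import Lra Lia Ring ClassicalEpsilon.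
From HB Require Import structures.
From mathcomp Require all_boot all_algebra.
From mathcomp Require Rstruct.
From mathcomp.real_closed Require complex.

Module Bridge.
Import all_boot all_algebra Rstruct complex.
Import GRing.Theory.
Local Open Scope ring_scope.
Local Notation CC := (Rcomplex R).
Definition phi (z : Defs.C) : CC := Complex (fst z) (snd z).
Definition psi (z : CC) : Defs.C := (Re z, Im z).
Lemma phiK z : psi (phi z) = z. Proof. by case: z. Qed.
Lemma psiK z : phi (psi z) = z. Proof. by case: z. Qed.
Lemma phi_inj z w : phi z = phi w -> z = w.
Proof. by move=> /(congr1 psi); rewrite !phiK. Qed.
Lemma phi_add z w : phi (Cadd z w) = phi z + phi w.
Proof. case: z => a b; case: w => c d. reflexivity. Qed.
Lemma phi_mul z w : phi (Cmul z w) = phi z * phi w.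
Proof. case: z => a b; case: w => c d. reflexivity. Qed.
Lemma phi0 : phi Defs.C0 = 0. Proof. reflexivity. Qed.
Lemma phi1 : phi Defs.C1 = 1. Proof. reflexivity. Qed.
Lemma phi_csum n f : phi (csum n f) = \sum_(i < n) phi (f i).
Proof.
elim: n => [|n IH] /=; first by rewrite big_ord0 phi0.
by rewrite phi_add IH big_ord_recr.
Qed.

Lemma inv_exists m (M : mat) :
  (forall c : nat -> Defs.C,
     (forall j, lt j m -> csum m (fun i => Cmul (c i) (M i j)) = Defs.C0) ->
     forall i, lt i m -> c i = Defs.C0) ->
  exists B, is_inv m M B.
Proof.
case: m => [|m] H.
  by exists M; split => i j /(@ltP _ _).
pose Mx : 'M[CC]_m.+1 := \matrix_(i, j) phi (M i j).
have rf : row_free Mx.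
  rewrite -kermx_eq0; apply/eqP/row_matrixP => i; rewrite row0.
  set u := row i (kermx Mx).
  have uM : u *m Mx = 0 by apply/sub_kermxP; exact: row_sub.
  pose c k := psi (u 0 (inord k)).
  have Hc : forall k, lt k m.+1 -> c k = Defs.C0.
    apply: H => j /ltP lj; apply: phi_inj; rewrite phi_csum phi0.
    transitivity ((u *m Mx) 0 (Ordinal lj)); last by rewrite uM mxE.
    rewrite mxE; apply: eq_bigr => k _; rewrite phi_mul /c psiK inord_val /u /Mx !mxE.
    by [].
  apply/rowP => k; rewrite [RHS]mxE.
  have := Hc k (ltP (ltn_ord k)); rewrite /c inord_val => /(congr1 phi).
  by rewrite psiK phi0.
have uM : Mx \in unitmx by rewrite -row_free_unit.
pose B (i j : nat) := psi (invmx Mx (inord i) (inord j)).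
have key : forall i k, (i < m.+1)%N -> (k < m.+1)%N ->
   (if Nat.eqb i k then 1 else 0) = (1%:M : 'M[CC]_m.+1) (inord i) (inord k).
  move=> i k li lk; rewrite mxE.
  case: Nat.eqb_spec => [->|ne]; first by rewrite eqxx.
  rewrite (_ : (inord i == inord k :> 'I_m.+1) = false) //.
  by apply/negbTE/eqP => /(congr1 val); rewrite /= !inordK.
exists B; split => i k /ltP li /ltP lk; apply: phi_inj; rewrite phi_csum;
  rewrite /idm [RHS]fun_if phi1 phi0 key //.
- rewrite -(mulmxV uM) mxE; apply: eq_bigr => j _.
  by rewrite phi_mul /B psiK /Mx !mxE inordK // inord_val.
- rewrite -(mulVmx uM) mxE; apply: eq_bigr => j _.
  by rewrite phi_mul /B psiK /Mx !mxE inordK // inord_val.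
Qed.
End Bridge.

Import Defs.
Open Scope R_scope.

Definition Copp (z : C) : C := (- fst z, - snd z).
Definition Csub (z w : C) : C := Cadd z (Copp w).

Lemma Cpair_eq (a b c d : R) : a = c -> b = d -> (a, b) = (c, d).
Proof. intros; subst; reflexivity. Qed.

Ltac csolve := repeat match goal with z : C |- _ => destruct z end;
  unfold Csub, Copp, Cadd, Cmul, Cconj, C0, C1 in *; simpl; apply Cpair_eq; ring.

Lemma Cring : ring_theory C0 C1 Cadd Cmul Csub Copp (@eq C).
Proof. split; intros; csolve. Qed.
Add Ring Cr : Cring.

Lemma Cconj_add z w : Cconj (Cadd z w) = Cadd (Cconj z) (Cconj w). Proof. csolve. Qed.
Lemma Cconj_mul z w : Cconj (Cmul z w) = Cmul (Cconj z) (Cconj w). Proof. csolve. Qed.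
Lemma Cconj0 : Cconj C0 = C0. Proof. csolve. Qed.
Lemma fst_add z w : fst (Cadd z w) = fst z + fst w. Proof. reflexivity. Qed.

Lemma csum_ext n f g : (forall i, (i < n)%nat -> f i = g i) -> csum n f = csum n g.
Proof. induction n; simpl; intros H; auto. rewrite IHn, H; auto. Qed.
Lemma csum_add n f g : csum n (fun i => Cadd (f i) (g i)) = Cadd (csum n f) (csum n g).
Proof. induction n; simpl. csolve. rewrite IHn. ring. Qed.
Lemma csum_sub n f g : csum n (fun i => Csub (f i) (g i)) = Csub (csum n f) (csum n g).
Proof. induction n; simpl. csolve. rewrite IHn. ring. Qed.
Lemma csum_mull n c f : csum n (fun i => Cmul c (f i)) = Cmul c (csum n f).
Proof. induction n; simpl. csolve. rewrite IHn. ring. Qed.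
Lemma csum_mulr n c f : csum n (fun i => Cmul (f i) c) = Cmul (csum n f) c.
Proof. induction n; simpl. csolve. rewrite IHn. ring. Qed.
Lemma csum_zero n f : (forall i, (i < n)%nat -> f i = C0) -> csum n f = C0.
Proof. induction n; simpl; intros H; auto. rewrite IHn, H; auto. csolve. Qed.
Lemma csum_swap n p f : csum n (fun i => csum p (fun j => f i j)) = csum p (fun j => csum n (fun i => f i j)).
Proof.
  induction n; simpl. symmetry; apply csum_zero; auto.
  rewrite IHn, <- csum_add. reflexivity.
Qed.
Lemma csum_conj n f : Cconj (csum n f) = csum n (fun i => Cconj (f i)).
Proof. induction n; simpl. csolve. rewrite Cconj_add, IHn. reflexivity. Qed.
Lemma fst_csum n f : fst (csum n f) = rsum n (fun i => fst (f i)).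
Proof. induction n; simpl; auto. rewrite IHn. reflexivity. Qed.

Lemma rsum_ext n f g : (forall i, (i < n)%nat -> f i = g i) -> rsum n f = rsum n g.
Proof. induction n; simpl; intros H; auto. rewrite IHn, H; auto. Qed.
Lemma rsum_add n f g : rsum n (fun i => f i + g i) = rsum n f + rsum n g.
Proof. induction n; simpl. ring. rewrite IHn. ring. Qed.
Lemma rsum_nonneg n f : (forall i, (i < n)%nat -> 0 <= f i) -> 0 <= rsum n f.
Proof. induction n; simpl; intros H. lra. pose proof (H n ltac:(lia)). pose proof (IHn ltac:(auto)). lra. Qed.
Lemma rsum_le n f g : (forall i, (i < n)%nat -> f i <= g i) -> rsum n f <= rsum n g.
Proof. induction n; simpl; intros H. lra. pose proof (H n ltac:(lia)). pose proof (IHn ltac:(auto)). lra. Qed.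
Lemma rsum_le_eq n u v : (forall j, (j < n)%nat -> u j <= v j) -> rsum n v <= rsum n u ->
  forall j, (j < n)%nat -> u j = v j.
Proof.
  induction n; simpl; intros H1 H2 j Hj. lia.
  assert (rsum n u <= rsum n v) by (apply rsum_le; auto).
  pose proof (H1 n ltac:(lia)).
  destruct (Nat.eq_dec j n). subst; lra.
  apply IHn; auto. lra. lia.
Qed.
Lemma rsum_zero_each n f : (forall i, (i < n)%nat -> 0 <= f i) -> rsum n f = 0 ->
  forall i, (i < n)%nat -> f i = 0.
Proof.
  intros H1 H2 i Hi. symmetry.
  apply (rsum_le_eq n (fun _ => 0) f); auto.
  rewrite H2. clear. induction n; simpl; lra.
Qed.

Lemma rmax_ge n f j : (j < n)%nat -> f j <= rmax n f.
Proof.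
  induction n; simpl; intros H. lia.
  destruct (Nat.eq_dec j n). subst. apply Rmax_r.
  eapply Rle_trans. apply IHn; lia. apply Rmax_l.
Qed.
Lemma rmax_mono n f g : (forall j, (j < n)%nat -> f j <= g j) -> rmax n f <= rmax n g.
Proof.
  induction n; simpl; intros H. lra.
  apply Rmax_lub. eapply Rle_trans. apply IHn; auto. apply Rmax_l.
  eapply Rle_trans. apply H; lia. apply Rmax_r.
Qed.
Lemma rmax_ext n f g : (forall i, (i < n)%nat -> f i = g i) -> rmax n f = rmax n g.
Proof. induction n; simpl; intros H; auto. rewrite IHn, H; auto. Qed.

Lemma rpow_nonneg x q : 0 <= rpow x q.
Proof. unfold rpow. destruct Req_EM_T. lra. unfold Rpower. left; apply exp_pos. Qed.
Lemma rpow_lt x y q : 0 < q -> 0 <= x < y -> rpow x q < rpow y q.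
Proof.
  intros Hq [H1 H2]. unfold rpow.
  destruct (Req_EM_T y 0). lra.
  destruct (Req_EM_T x 0). unfold Rpower; apply exp_pos.
  unfold Rpower. apply exp_increasing. apply Rmult_lt_compat_l; auto.
  apply ln_increasing; lra.
Qed.
Lemma rpow_le x y q : 0 < q -> 0 <= x <= y -> rpow x q <= rpow y q.
Proof.
  intros Hq [H1 H2]. destruct H2. left; apply rpow_lt; lra. subst; lra.
Qed.
Lemma rpow_le_inv x y q : 0 < q -> 0 <= x -> 0 <= y -> rpow x q <= rpow y q -> x <= y.
Proof.
  intros Hq H1 H2 H. destruct (Rle_dec x y); auto.
  assert (rpow y q < rpow x q) by (apply rpow_lt; lra). lra.
Qed.
Lemma rpow_inj x y q : 0 < q -> 0 <= x -> 0 <= y -> rpow x q = rpow y q -> x = y.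
Proof.
  intros. apply Rle_antisym; eapply rpow_le_inv; eauto; lra.
Qed.

Definition cn (c : nat) (q : ext) (f : nat -> R) : R :=
  match q with
  | Fin q => rpow (rsum c (fun j => rpow (f j) q)) (/ q)
  | Inf => rmax c f
  end.
Lemma colnorm_cn r c q M : colnorm r c q M = cn c q (colnorm2 r M).
Proof. destruct q; reflexivity. Qed.

Lemma cn_mono c q f g : valid_exp q -> (forall j, (j < c)%nat -> 0 <= f j <= g j) ->
  cn c q f <= cn c q g.
Proof.
  destruct q as [q|]; simpl; intros Hq H.
  - apply rpow_le. apply Rinv_0_lt_compat; lra. split.
    apply rsum_nonneg; intros; apply rpow_nonneg.
    apply rsum_le; intros. apply rpow_le. lra. apply H; auto.
  - apply rmax_mono; intros; apply H; auto.
Qed.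
Lemma cn_ext c q f g : (forall j, (j < c)%nat -> f j = g j) -> cn c q f = cn c q g.
Proof.
  destruct q; simpl; intros H. f_equal. apply rsum_ext; intros; rewrite H; auto.
  apply rmax_ext; auto.
Qed.
Lemma cn_eq_fin c q f g : 1 <= q -> (forall j, (j < c)%nat -> 0 <= f j <= g j) ->
  cn c (Fin q) g <= cn c (Fin q) f -> forall j, (j < c)%nat -> f j = g j.
Proof.
  simpl; intros Hq H Hle j Hj.
  apply rpow_le_inv in Hle; [| apply Rinv_0_lt_compat; lra
     | apply rsum_nonneg; intros; apply rpow_nonneg
     | apply rsum_nonneg; intros; apply rpow_nonneg].
  apply (rpow_inj _ _ q). lra. apply H; auto. pose proof (H j Hj); lra.
  apply (rsum_le_eq c (fun j => rpow (f j) q) (fun j => rpow (g j) q)); auto.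
  intros. apply rpow_le. lra. apply H; auto.
Qed.

Lemma Cmod2_nonneg z : 0 <= Cmod2 z.
Proof. unfold Cmod2. nra. Qed.
Lemma Cmod2_zero z : Cmod2 z = 0 -> z = C0.
Proof. destruct z as [a b]; unfold Cmod2, C0; simpl; intros. apply Cpair_eq; nra. Qed.
Lemma Cmod2_add z w : Cmod2 (Cadd z w) = Cmod2 z + Cmod2 w + 2 * fst (Cmul z (Cconj w)).
Proof. destruct z, w; unfold Cmod2, Cadd, Cmul, Cconj; simpl; ring. Qed.
Lemma Cmod2_fst z : fst (Cmul z (Cconj z)) = Cmod2 z.
Proof. destruct z; unfold Cmod2, Cmul, Cconj; simpl; ring. Qed.

Definition colsq (r : nat) (M : mat) (j : nat) := rsum r (fun i => Cmod2 (M i j)).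
Lemma colsq_nonneg r M j : 0 <= colsq r M j.
Proof. apply rsum_nonneg; intros; apply Cmod2_nonneg. Qed.

Lemma pyth r (a b : nat -> C) :
  csum r (fun i => Cmul (a i) (Cconj (b i))) = C0 ->
  rsum r (fun i => Cmod2 (Cadd (a i) (b i))) =
  rsum r (fun i => Cmod2 (a i)) + rsum r (fun i => Cmod2 (b i)).
Proof.
  intros H.
  rewrite (rsum_ext r _ (fun i => (Cmod2 (a i) + Cmod2 (b i)) + 2 * fst (Cmul (a i) (Cconj (b i)))))
    by (intros; apply Cmod2_add).
  rewrite rsum_add, rsum_add.
  assert (rsum r (fun i => 2 * fst (Cmul (a i) (Cconj (b i)))) = 0).
  { assert (forall k, rsum k (fun i => 2 * fst (Cmul (a i) (Cconj (b i)))) =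
                      2 * fst (csum k (fun i => Cmul (a i) (Cconj (b i))))).
    { induction k; cbn [rsum csum]. simpl; ring. rewrite IHk, fst_add. ring. }
    rewrite H0, H. simpl. ring. }
  lra.
Qed.

Lemma mmul_assoc p q M N K i k :
  mmul p M (mmul q N K) i k = mmul q (mmul p M N) K i k.
Proof.
  unfold mmul.
  rewrite (csum_ext p _ (fun j => csum q (fun l => Cmul (M i j) (Cmul (N j l) (K l k)))))
    by (intros; symmetry; apply csum_mull).
  rewrite csum_swap. apply csum_ext; intros l _.
  rewrite <- csum_mulr. apply csum_ext; intros; ring.
Qed.

Lemma orth m n (A : mat) (U w : nat -> C) :
  (forall p, (p < m)%nat -> csum n (fun i => Cmul (A p i) (U i)) = C0) ->
  csum n (fun i => Cmul (csum m (fun p => Cmul (Cconj (A p i)) (w p))) (Cconj (U i))) = C0.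
Proof.
  intros H.
  rewrite (csum_ext n _ (fun i => csum m (fun p => Cmul (w p) (Cconj (Cmul (A p i) (U i))))))
    by (intros; rewrite <- csum_mulr; apply csum_ext; intros; rewrite Cconj_mul; ring).
  rewrite csum_swap. apply csum_zero; intros p Hp.
  rewrite csum_mull, <- csum_conj, H by auto. rewrite Cconj0. ring.
Qed.

Lemma inv_exists m (M : mat) :
  (forall c : nat -> C,
     (forall j, lt j m -> csum m (fun i => Cmul (c i) (M i j)) = C0) ->
     forall i, lt i m -> c i = C0) ->
  exists B, is_inv m M B.
Proof. exact (Bridge.inv_exists m M). Qed.

Definition Hm (n : nat) (A : mat) := mmul n A (conjtr A).

Lemma H_inj m n A : full_row_rank m n A ->
  forall c : nat -> C,
     (forall j, lt j m -> csum m (fun i => Cmul (c i) (Hm n A i j)) = C0) ->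
     forall i, lt i m -> c i = C0.
Proof.
  intros FR c Hc.
  set (v := fun k => csum m (fun i => Cmul (c i) (A i k))).
  assert (E1 : forall j, csum m (fun i => Cmul (c i) (Hm n A i j)) =
                         csum n (fun k => Cmul (v k) (Cconj (A j k)))).
  { intros j. unfold Hm, mmul, conjtr, v.
    rewrite (csum_ext m _ (fun i => csum n (fun k => Cmul (c i) (Cmul (A i k) (Cconj (A j k))))))
      by (intros; symmetry; apply csum_mull).
    rewrite csum_swap. apply csum_ext; intros k _.
    rewrite <- csum_mulr. apply csum_ext; intros; ring. }
  assert (E2 : csum m (fun j => Cmul (csum m (fun i => Cmul (c i) (Hm n A i j))) (Cconj (c j))) = C0).
  { apply csum_zero; intros j Hj. rewrite Hc by auto. ring. }
  assert (E3 : csum m (fun j => Cmul (csum m (fun i => Cmul (c i) (Hm n A i j))) (Cconj (c j)))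
               = csum n (fun k => Cmul (v k) (Cconj (v k)))).
  { rewrite (csum_ext m _ (fun j => csum n (fun k => Cmul (v k) (Cconj (Cmul (c j) (A j k))))))
      by (intros; rewrite E1, <- csum_mulr; apply csum_ext; intros; rewrite Cconj_mul; ring).
    rewrite csum_swap. apply csum_ext; intros k _.
    rewrite csum_mull, <- csum_conj. reflexivity. }
  rewrite E3 in E2.
  assert (R0 : rsum n (fun k => Cmod2 (v k)) = 0).
  { rewrite <- (rsum_ext n (fun k => fst (Cmul (v k) (Cconj (v k))))) by (intros; apply Cmod2_fst).
    rewrite <- fst_csum, E2. reflexivity. }
  apply FR. intros j Hj. apply Cmod2_zero.
  apply (rsum_zero_each n (fun k => Cmod2 (v k))); auto.
  intros; apply Cmod2_nonneg.
Qed.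

Lemma B_inv m n A : full_row_rank m n A -> is_inv m (Hm n A) (minv m (Hm n A)).
Proof.
  intros FR. unfold minv. apply epsilon_spec. apply inv_exists. apply H_inj; auto.
Qed.

Lemma pinv_G m n A : full_row_rank m n A -> Gset m n A (pinv m n A).
Proof.
  intros FR i k Hi Hk. unfold pinv. rewrite mmul_assoc.
  destruct (B_inv m n A FR) as [E _]. apply E; auto.
Qed.

Definition Zof m n A (Y : mat) : mat := fun i j => Csub (Y i j) (pinv m n A i j).

Lemma AZ0 m n A Y : full_row_rank m n A -> Gset m n A Y ->
  forall p k, (p < m)%nat -> (k < m)%nat -> mmul n A (Zof m n A Y) p k = C0.
Proof.
  intros FR G p k Hp Hk. unfold mmul, Zof.
  rewrite (csum_ext n _ (fun i => Csub (Cmul (A p i) (Y i k)) (Cmul (A p i) (pinv m n A i k))))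
    by (intros; ring).
  rewrite csum_sub. change (Csub (mmul n A Y p k) (mmul n A (pinv m n A) p k) = C0).
  rewrite G, pinv_G by auto. ring.
Qed.

Lemma colsq_G m n A Y : full_row_rank m n A -> Gset m n A Y ->
  forall k, (k < m)%nat ->
  colsq n Y k = colsq n (pinv m n A) k + colsq n (Zof m n A Y) k.
Proof.
  intros FR G k Hk. unfold colsq.
  rewrite <- pyth.
  - apply rsum_ext; intros. unfold Zof. f_equal. ring.
  - unfold pinv at 1. unfold mmul at 1. unfold conjtr.
    apply (orth m n A (fun i => Zof m n A Y i k) (fun p => minv m (Hm n A) p k)).
    intros p Hp. apply (AZ0 m n A Y FR G p k Hp Hk).
Qed.

Lemma colsq_PG m n A Y : full_row_rank m n A -> Gset m n A Y ->
  forall k, (k < n)%nat ->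
  colsq n (mmul m Y A) k = colsq n (mmul m (pinv m n A) A) k + colsq n (mmul m (Zof m n A Y) A) k.
Proof.
  intros FR G k Hk. unfold colsq.
  rewrite <- pyth.
  - apply rsum_ext; intros. f_equal. unfold mmul at 2 3. rewrite <- csum_add.
    apply csum_ext; intros. unfold Zof. ring.
  - rewrite (csum_ext n _ (fun i => Cmul (csum m (fun p => Cmul (Cconj (A p i)) (mmul m (minv m (Hm n A)) A p k)))
                                      (Cconj (mmul m (Zof m n A Y) A i k)))).
    + apply (orth m n A (fun i => mmul m (Zof m n A Y) A i k) (fun p => mmul m (minv m (Hm n A)) A p k)).
      intros p Hp. change (mmul n A (mmul m (Zof m n A Y) A) p k = C0).
      rewrite mmul_assoc. unfold mmul at 1. apply csum_zero; intros l Hl.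
      rewrite AZ0 by auto. ring.
    + intros i _. f_equal. unfold pinv. rewrite <- mmul_assoc. reflexivity.
Qed.

Lemma colnorm2_sq r M j : colnorm2 r M j = sqrt (colsq r M j).
Proof. reflexivity. Qed.

Lemma sqrt_le_sum a b : 0 <= a -> 0 <= b -> sqrt a <= sqrt (a + b).
Proof. intros. apply sqrt_le_1_alt. lra. Qed.

Lemma ginv_P m n A q : full_row_rank m n A -> valid_exp q -> in_ginv m n q A (pinv m n A).
Proof.
  intros FR Hq. split. apply pinv_G; auto.
  intros Y G. rewrite !colnorm_cn. apply cn_mono; auto. intros j Hj.
  rewrite !colnorm2_sq, (colsq_G m n A Y FR G j Hj). split. apply sqrt_pos.
  apply sqrt_le_sum; apply colsq_nonneg.
Qed.

Lemma pginv_P m n A q : full_row_rank m n A -> valid_exp q -> in_pginv m n q A (pinv m n A).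
Proof.
  intros FR Hq. split. apply pinv_G; auto.
  intros Y G. rewrite !colnorm_cn. apply cn_mono; auto. intros j Hj.
  rewrite !colnorm2_sq, (colsq_PG m n A Y FR G j Hj). split. apply sqrt_pos.
  apply sqrt_le_sum; apply colsq_nonneg.
Qed.

Lemma mmul_meq_r r p c M N N' : meq p c N N' -> meq r c (mmul p M N) (mmul p M N').
Proof. intros H i k Hi Hk. unfold mmul. apply csum_ext; intros. rewrite H; auto. Qed.
Lemma mmul_meq_l r p c M M' N : meq r p M M' -> meq r c (mmul p M N) (mmul p M' N).
Proof. intros H i k Hi Hk. unfold mmul. apply csum_ext; intros. rewrite H; auto. Qed.
Lemma colnorm_meq r c q M M' : meq r c M M' -> colnorm r c q M = colnorm r c q M'.
Proof.
  intros H. rewrite !colnorm_cn. apply cn_ext; intros j Hj. unfold colnorm2. f_equal.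
  apply rsum_ext; intros. rewrite H; auto.
Qed.

Lemma ginv_meq m n q A X Y : in_ginv m n q A Y -> meq n m X Y -> in_ginv m n q A X.
Proof.
  intros [G H] E. split.
  - intros i k Hi Hk. rewrite (mmul_meq_r m n m A X Y E i k Hi Hk). apply G; auto.
  - intros Z GZ. rewrite (colnorm_meq n m q X Y E). apply H; auto.
Qed.
Lemma pginv_meq m n q A X Y : in_pginv m n q A Y -> meq n m X Y -> in_pginv m n q A X.
Proof.
  intros [G H] E. split.
  - intros i k Hi Hk. rewrite (mmul_meq_r m n m A X Y E i k Hi Hk). apply G; auto.
  - intros Z GZ. rewrite (colnorm_meq n n q (mmul m X A) (mmul m Y A)).
    apply H; auto. apply mmul_meq_l; auto.
Qed.

Lemma colsq_zero r M j : colsq r M j = 0 -> forall i, (i < r)%nat -> M i j = C0.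
Proof.
  intros H i Hi. apply Cmod2_zero.
  apply (rsum_zero_each r (fun i => Cmod2 (M i j))); auto. intros; apply Cmod2_nonneg.
Qed.

Lemma sqrt_sum_eq a b : 0 <= a -> 0 <= b -> sqrt a = sqrt (a + b) -> b = 0.
Proof. intros. apply sqrt_inj in H1; lra. Qed.

Lemma Csub_zero x p : Csub x p = C0 -> x = p.
Proof. intros H. replace x with (Cadd (Csub x p) p) by ring. rewrite H. ring. Qed.

Lemma ginv_unique m n A q X : full_row_rank m n A -> 1 <= q ->
  in_ginv m n (Fin q) A X -> meq n m X (pinv m n A).
Proof.
  intros FR Hq [G H].
  assert (Hle := H _ (pinv_G m n A FR)). rewrite !colnorm_cn in Hle.
  assert (E := cn_eq_fin m q (colnorm2 n (pinv m n A)) (colnorm2 n X) Hq).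
  assert (K : forall j, (j < m)%nat -> colsq n (Zof m n A X) j = 0).
  { intros j Hj. apply (sqrt_sum_eq (colsq n (pinv m n A) j)); try apply colsq_nonneg.
    rewrite <- (colsq_G m n A X FR G j Hj). apply E; auto.
    intros j' Hj'. rewrite !colnorm2_sq, (colsq_G m n A X FR G j' Hj'). split. apply sqrt_pos.
    apply sqrt_le_sum; apply colsq_nonneg. }
  intros i j Hi Hj. apply Csub_zero. apply (colsq_zero n _ j (K j Hj) i Hi).
Qed.

Lemma pginv_unique m n A q X : full_row_rank m n A -> 1 <= q ->
  in_pginv m n (Fin q) A X -> meq n m X (pinv m n A).
Proof.
  intros FR Hq [G H].
  assert (Hle := H _ (pinv_G m n A FR)). rewrite !colnorm_cn in Hle.
  assert (E := cn_eq_fin n q (colnorm2 n (mmul m (pinv m n A) A)) (colnorm2 n (mmul m X A)) Hq).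
  assert (K : forall j, (j < n)%nat -> colsq n (mmul m (Zof m n A X) A) j = 0).
  { intros j Hj. apply (sqrt_sum_eq (colsq n (mmul m (pinv m n A) A) j)); try apply colsq_nonneg.
    rewrite <- (colsq_PG m n A X FR G j Hj). apply E; auto.
    intros j' Hj'. rewrite !colnorm2_sq, (colsq_PG m n A X FR G j' Hj'). split. apply sqrt_pos.
    apply sqrt_le_sum; apply colsq_nonneg. }
  intros i j Hi Hj. apply Csub_zero.
  apply (FR (fun l => Zof m n A X i l)); auto.
  intros k Hk. apply (colsq_zero n _ k (K k Hk) i Hi).
Qed.

Lemma rsum_ge_term n f i : (forall j, (j < n)%nat -> 0 <= f j) -> (i < n)%nat -> f i <= rsum n f.
Proof.
  induction n; simpl; intros H Hi. lia.
  destruct (Nat.eq_dec i n). subst. pose proof (rsum_nonneg n f ltac:(auto)). lra.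
  pose proof (H n ltac:(lia)). pose proof (IHn ltac:(auto) ltac:(lia)). lra.
Qed.
Lemma colnorm2_ge r M i j : (i < r)%nat -> sqrt (Cmod2 (M i j)) <= colnorm2 r M j.
Proof.
  intros Hi. unfold colnorm2. apply sqrt_le_1_alt.
  apply (rsum_ge_term r (fun i => Cmod2 (M i j))); auto. intros; apply Cmod2_nonneg.
Qed.
Lemma rmax_le_bound n f b : (forall j, (j < n)%nat -> f j <= b) -> 0 <= b -> rmax n f <= b.
Proof.
  induction n; simpl; intros H Hb. lra.
  apply Rmax_lub. apply IHn; auto. apply H; lia.
Qed.
Lemma sqrt_le1 x : x <= 1 -> sqrt x <= 1.
Proof. intros. rewrite <- sqrt_1. apply sqrt_le_1_alt. lra. Qed.
Lemma Cmod2_C1 : Cmod2 C1 = 1. Proof. unfold Cmod2, C1; simpl; ring. Qed.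

Definition Xeta (eta : R) : mat :=
  fun i j => match i, j with
             | O, O => (eta, 0)
             | 1%nat, 1%nat => C1
             | 2%nat, O => (1 - eta, 0)
             | _, _ => C0
             end.

Lemma part3 eta : 0 < eta < 1 ->
  full_row_rank 2 3 (Aeta eta) /\
  exists X : mat, in_ginv 2 3 Inf (Aeta eta) X /\ ~ meq 3 2 X (pinv 2 3 (Aeta eta)).
Proof.
  intros He. split.
  - intros c Hc i Hi.
    pose proof (Hc 0%nat ltac:(lia)) as H0. pose proof (Hc 1%nat ltac:(lia)) as H1.
    unfold Aeta in H0, H1. cbn [csum] in H0, H1.
    assert (Hk : / eta <> 0) by (apply Rinv_neq_0_compat; lra).
    destruct (c 0%nat) as [a b] eqn:Ea. destruct (c 1%nat) as [x y] eqn:Ex.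
    unfold Cadd, Cmul, C0, C1 in H0, H1; simpl in H0, H1.
    injection H0; injection H1; intros.
    destruct i as [|[|i]]; [| |lia]; rewrite ?Ea, ?Ex; unfold C0; apply Cpair_eq.
    + assert (Hz : a * / eta = 0) by lra. apply Rmult_integral in Hz; destruct Hz; auto; contradiction.
    + assert (Hz : b * / eta = 0) by lra. apply Rmult_integral in Hz; destruct Hz; auto; contradiction.
    + lra.
    + lra.
  - exists (Xeta eta). split; [split|].
    + intros i k Hi Hk. unfold mmul, idm, Aeta, Xeta.
      destruct i as [|[|i]]; [| |lia]; destruct k as [|[|k]]; try lia; cbn;
        unfold Cadd, Cmul, C0, C1; simpl; apply Cpair_eq; field; lra.
    + intros Y G.
      assert (Y11 : Y 1%nat 1%nat = C1).
      { transitivity (mmul 3 (Aeta eta) Y 1%nat 1%nat). unfold mmul, Aeta. cbn [csum]. ring. apply G; lia. }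
      unfold colnorm. apply Rle_trans with 1.
      * apply rmax_le_bound; [|lra]. intros j Hj.
        destruct j as [|[|j]]; [| |lia]; unfold colnorm2, Xeta; cbn [rsum]; apply sqrt_le1;
          unfold Cmod2, C0, C1; simpl; nra.
      * eapply Rle_trans; [|apply (rmax_ge 2 _ 1%nat); lia].
        eapply Rle_trans; [|apply (colnorm2_ge 3 Y 1%nat 1%nat); lia].
        rewrite Y11, Cmod2_C1, sqrt_1. lra.
    + intros E. specialize (E 2%nat 0%nat ltac:(lia) ltac:(lia)).
      assert (P : pinv 2 3 (Aeta eta) 2%nat 0%nat = C0).
      { unfold pinv, mmul, conjtr, Aeta. cbn [csum]. rewrite !Cconj0. ring. }
      rewrite P in E. unfold Xeta, C0 in E. injection E. lra.
Qed.

Definition A4 : mat :=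
  fun i j => match i, j with
             | O, O => C1 | 1%nat, 1%nat => C1 | 1%nat, 2%nat => C1 | _, _ => C0 end.
Definition X4 : mat :=
  fun i j => match i, j with
             | O, O => C1 | 1%nat, 1%nat => C1 | _, _ => C0 end.

Lemma part4 : exists (m n : nat) (A : mat),
      (m < n)%nat /\ full_row_rank m n A /\
      exists X : mat, in_pginv m n Inf A X /\ ~ meq n m X (pinv m n A).
Proof.
  exists 2%nat, 3%nat, A4. split; [lia|split].
  - intros c Hc i Hi.
    pose proof (Hc 0%nat ltac:(lia)) as H0. pose proof (Hc 1%nat ltac:(lia)) as H1.
    unfold A4 in H0, H1. cbn [csum] in H0, H1.
    destruct i as [|[|i]]; [| |lia].
    + rewrite <- H0. ring.
    + rewrite <- H1. ring.
  - exists X4. split; [split|].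
    + intros i k Hi Hk. unfold mmul, idm, A4, X4.
      destruct i as [|[|i]]; [| |lia]; destruct k as [|[|k]]; try lia; cbn [csum Nat.eqb]; ring.
    + intros Y G.
      assert (Y00 : mmul 2 Y A4 0%nat 0%nat = C1).
      { transitivity (mmul 3 A4 Y 0%nat 0%nat). unfold mmul, A4. cbn [csum]. ring. apply G; lia. }
      unfold colnorm. apply Rle_trans with 1.
      * apply rmax_le_bound; [|lra]. intros j Hj.
        destruct j as [|[|[|j]]]; [| | |lia]; unfold colnorm2, mmul, X4, A4; cbn [rsum csum];
          apply sqrt_le1; unfold Cmod2, Cadd, Cmul, C0, C1; simpl; nra.
      * eapply Rle_trans; [|apply (rmax_ge 3 _ 0%nat); lia].
        eapply Rle_trans; [|apply (colnorm2_ge 3 _ 0%nat 0%nat); lia].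
        rewrite Y00, Cmod2_C1, sqrt_1. lra.
    + intros E. pose proof (E 1%nat 1%nat ltac:(lia) ltac:(lia)) as E1.
      pose proof (E 2%nat 1%nat ltac:(lia) ltac:(lia)) as E2.
      assert (P : pinv 2 3 A4 1%nat 1%nat = pinv 2 3 A4 2%nat 1%nat).
      { unfold pinv, mmul, conjtr, A4. cbn [csum]. reflexivity. }
      rewrite <- E1, <- E2 in P. unfold X4, C1, C0 in P. injection P. lra.
Qed.


Theorem corollary2 :
  (forall (m n : nat) (A : mat) (q : ext),
      (m < n)%nat -> full_row_rank m n A -> valid_exp q ->
      in_ginv m n q A (pinv m n A) /\ in_pginv m n q A (pinv m n A)) /\
  (forall (m n : nat) (A : mat) (q : R),
      (m < n)%nat -> full_row_rank m n A -> 1 <= q ->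
      forall X : mat,
        (in_ginv m n (Fin q) A X <-> meq n m X (pinv m n A)) /\
        (in_pginv m n (Fin q) A X <-> meq n m X (pinv m n A))) /\
  (forall eta : R, 0 < eta < 1 ->
      full_row_rank 2 3 (Aeta eta) /\
      exists X : mat, in_ginv 2 3 Inf (Aeta eta) X /\
                      ~ meq 3 2 X (pinv 2 3 (Aeta eta))) /\
  (exists (m n : nat) (A : mat),
      (m < n)%nat /\ full_row_rank m n A /\
      exists X : mat, in_pginv m n Inf A X /\ ~ meq n m X (pinv m n A)).
Proof.
  split; [|split; [|split]].
  - intros m n A q _ FR Hq. split; [apply ginv_P | apply pginv_P]; auto.
  - intros m n A q _ FR Hq X. split; split.
    + apply ginv_unique; auto.
    + intros E. apply (ginv_meq m n (Fin q) A X (pinv m n A)); auto. apply ginv_P; auto.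
    + apply pginv_unique; auto.
    + intros E. apply (pginv_meq m n (Fin q) A X (pinv m n A)); auto. apply pginv_P; auto.
  - apply part3.
  - apply part4.
Qed.
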